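(* Let $\mathbf{F}\in\mathbb{K}[x]^{n\times n}$ be nonsingular and column reduced, let $\mathbf{H}$ be its Hermite normal form, let $\vec{s}=[s_1,\dots,s_n]$ with $s_i=\deg h_{ii}$, let $s_{\max}=\max_i s_i$ and $\vec{u}=[s_{\max},\dots,s_{\max}]\in\mathbb{Z}^n$. Suppose $\mathbf{N}\in\mathbb{K}[x]^{2n\times n}$ is a $[-\vec{u},-\vec{s}]$-minimal right kernel basis of $[\mathbf{F},-I]\in\mathbb{K}[x]^{n\times 2n}$, partitioned as $\mathbf{N}=\begin{bmatrix}\mathbf{N}_u\\ \mathbf{N}_d\end{bmatrix}$ with $\mathbf{N}_u,\mathbf{N}_d\in\mathbb{K}[x]^{n\times n}$. Then $\mathbf{N}_u$ is unimodular, and $\mathbf{N}_d$ has row degrees $\vec{s}$ (the $i$-th row of $\mathbf{N}_d$ has degree $s_i$) and is unimodularly equivalent to $\mathbf{H}$, i.e. $\mathbf{N}_d=\mathbf{H}\mathbf{V}$ for some unimodular $\mathbf{V}$.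
   Context: $\mathbb{K}$ is a field. Unimodular: square polynomial matrix with determinant a nonzero constant. Hermite normal form of nonsingular $\mathbf{F}$: the unique $\mathbf{H}=\mathbf{F}\mathbf{U}$, $\mathbf{U}$ unimodular, with $\mathbf{H}=[h_{ij}]$ lower triangular, $h_{ii}$ monic, and $\deg h_{ij}<\deg h_{ii}$ for $j<i$. For a column vector $\mathbf{p}=[p_1,\dots,p_m]^T$ and shift $\vec{t}\in\mathbb{Z}^m$, the $\vec t$-column degree is $\mathrm{cdeg}_{\vec t}\,\mathbf{p}=\max_i(\deg p_i+t_i)$; for a matrix it is the list of shifted degrees of its columns. Writing $x^{\vec t}=\mathrm{diag}(x^{t_1},\dots,x^{t_m})$, a matrix $\mathbf{P}$ with $\vec{c}=\mathrm{cdeg}\,\mathbf{P}$ is column reduced if the matrix whose $(i,j)$ entry is the coefficient of $x^{c_j}$ in $p_{ij}$ has full column rank; $\mathbf{P}$ is $\vec t$-column reduced if $x^{\vec t}\mathbf{P}$ is column reduced. A right kernel basis of $\mathbf{A}\in\mathbb{K}[x]^{m\times k}$ is a full-rank matrix $\mathbf{N}$ with $\mathbf{A}\mathbf{N}=0$ whose columns generate the $\mathbb{K}[x]$-module $\{\mathbf{q}\in\mathbb{K}[x]^k:\mathbf{A}\mathbf{q}=0\}$; it is $\vec t$-minimal if it is moreover $\vec t$-column reduced. *)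

(* Defs.v *)
From HB Require Import structures.
From mathcomp Require Import all_boot all_order all_algebra.
Set Implicit Arguments. Unset Strict Implicit. Unset Printing Implicit Defensive.
Import Order.TTheory GRing.Theory Num.Theory.
Local Open Scope ring_scope.

Section PolyMat.
Variable K : fieldType.

Definition pdeg (p : {poly K}) : int := ((size p).-1)%:Z.

(* max on int extended with None = -infinity *)
Definition omax (a b : option int) : option int :=
  match a, b with
  | None, y => y
  | x, None => x
  | Some x, Some y => Some (Num.max x y)
  end.

(* t-shifted degree of a vector v = max_i (deg v_i + t_i); None (= -oo) for v = 0 *)
Definition sdeg (m : nat) (t : 'I_m -> int) (v : 'I_m -> {poly K}) : option int :=
  \big[omax/None]_(i | v i != 0) Some (pdeg (v i) + t i).

Definition cdeg (m k : nat) (t : 'I_m -> int) (P : 'M[{poly K}]_(m, k)) (j : 'I_k)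
  : option int := sdeg t (fun i => P i j).

Definition rdeg (m k : nat) (P : 'M[{poly K}]_(m, k)) (i : 'I_m) : option int :=
  sdeg (fun _ => 0) (fun j => P i j).

(* leading coefficient matrix of x^t P: entry (i,j) is the coefficient of
   x^(c_j) in x^(t_i) p_ij, where c_j = cdeg_t column j *)
Definition lcoef_mx (m k : nat) (t : 'I_m -> int) (P : 'M[{poly K}]_(m, k))
  : 'M[K]_(m, k) :=
  \matrix_(i, j)
    match cdeg t P j with
    | Some c => if (P i j != 0) && (pdeg (P i j) + t i == c)
                then lead_coef (P i j) else 0
    | None => 0
    end.

(* P is t-column reduced: x^t P is column reduced *)
Definition scol_reduced (m k : nat) (t : 'I_m -> int) (P : 'M[{poly K}]_(m, k)) : bool :=
  \rank (lcoef_mx t P) == k.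

Definition col_reduced (m k : nat) (P : 'M[{poly K}]_(m, k)) : bool :=
  scol_reduced (fun _ => 0) P.

Definition unimodular (n : nat) (U : 'M[{poly K}]_n) : Prop :=
  size (\det U) = 1%N.

Definition nonsingular (n : nat) (F : 'M[{poly K}]_n) : Prop := \det F != 0.

Definition hermite_form (n : nat) (H : 'M[{poly K}]_n) : Prop :=
  [/\ forall i j : 'I_n, (i < j)%N -> H i j = 0,
      forall i : 'I_n, H i i \is monic &
      forall i j : 'I_n, (j < i)%N -> (size (H i j) < size (H i i))%N].

Definition is_hermite_nf (n : nat) (F H : 'M[{poly K}]_n) : Prop :=
  hermite_form H /\ exists U, unimodular U /\ H = F *m U.

Definition full_col_rank (m k : nat) (N : 'M[{poly K}]_(m, k)) : bool :=
  \rank (map_mx (@tofrac _) N) == k.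

Definition right_kernel_basis (m k l : nat) (A : 'M[{poly K}]_(m, k))
    (N : 'M[{poly K}]_(k, l)) : Prop :=
  [/\ full_col_rank N, A *m N = 0 &
      forall q : 'cV[{poly K}]_k, A *m q = 0 -> exists c : 'cV[{poly K}]_l, q = N *m c].

Definition minimal_right_kernel_basis (m k l : nat) (t : 'I_k -> int)
    (A : 'M[{poly K}]_(m, k)) (N : 'M[{poly K}]_(k, l)) : Prop :=
  right_kernel_basis A N /\ scol_reduced t N.

End PolyMat.

Definition catshift (n1 n2 : nat) (a : 'I_n1 -> int) (b : 'I_n2 -> int)
  (i : 'I_(n1 + n2)) : int :=
  match split i with inl j => a j | inr j => b j end.

(* Main.v *)
Require Import Defs.
From HB Require Import structures.
From mathcomp Require Import all_boot all_order all_algebra.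
From mathcomp Require Import zify.
Set Implicit Arguments. Unset Strict Implicit. Unset Printing Implicit Defensive.
Import Order.TTheory GRing.Theory Num.Theory.
Local Open Scope ring_scope.

Lemma omaxA : associative omax.
Proof. by case=> [a|] [b|] [c|] //=; rewrite maxA. Qed.
Lemma omaxC : commutative omax.
Proof. by case=> [a|] [b|] //=; rewrite maxC. Qed.
Lemma omax0l : left_id None omax.
Proof. by case. Qed.
HB.instance Definition _ := Monoid.isComLaw.Build (option int) None omax omaxA omaxC omax0l.

Section Sdeg.
Variable K : fieldType.

Lemma sdeg_ge m (t : 'I_m -> int) (v : 'I_m -> {poly K}) i :
  v i != 0 -> exists c, sdeg t v = Some c /\ pdeg (v i) + t i <= c.
Proof.
move=> vi; rewrite /sdeg (bigD1 i) //=.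
case: (\big[omax/None]_(j | _) _) => [x|] /=; last by exists (pdeg (v i) + t i).
by eexists; split; [reflexivity| rewrite le_max lexx].
Qed.

Lemma sdeg_ex m (t : 'I_m -> int) (v : 'I_m -> {poly K}) c :
  sdeg t v = Some c -> exists i, v i != 0 /\ pdeg (v i) + t i = c.
Proof.
rewrite /sdeg; move: c; apply: (big_rec (fun x => forall c, x = Some c -> _)) => // i x vi IH c.
case: x IH => [x|] IH /=; last by case=> <-; exists i.
case=> <-; have [le|lt] := leP (pdeg (v i) + t i) x.
  by apply: IH.
by exists i.
Qed.

Lemma sdeg_None m (t : 'I_m -> int) (v : 'I_m -> {poly K}) :
  sdeg t v = None -> forall i, v i = 0.
Proof.
move=> h i; apply/eqP; apply: contraT => vi.
by have [c [hc _]] := sdeg_ge t vi; rewrite h in hc.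
Qed.

Lemma sdeg_Some m (t : 'I_m -> int) (v : 'I_m -> {poly K}) c :
  (exists i, v i != 0 /\ pdeg (v i) + t i = c) ->
  (forall j, v j != 0 -> pdeg (v j) + t j <= c) -> sdeg t v = Some c.
Proof.
move=> [i [vi ei]] hle.
have [c' [hc' le']] := sdeg_ge t vi.
have [j [vj ej]] := sdeg_ex hc'.
rewrite hc'; congr Some; apply/eqP; rewrite eq_le -{1}ej hle //=; by rewrite -ei.
Qed.

Lemma sdeg_le m (t : 'I_m -> int) (v : 'I_m -> {poly K}) c j :
  sdeg t v = Some c -> v j != 0 -> pdeg (v j) + t j <= c.
Proof. by move=> h vj; have [c' [h' le]] := sdeg_ge t vj; rewrite h in h'; case: h' => ->. Qed.


Lemma red_inj m k (t : 'I_m -> int) (P : 'M[{poly K}]_(m, k)) (a : 'cV[K]_k) :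
  scol_reduced t P -> lcoef_mx t P *m a = 0 -> a = 0.
Proof.
move=> /eqP hr ha.
have rf : row_free (lcoef_mx t P)^T by rewrite /row_free mxrank_tr hr.
apply: trmx_inj; apply: (row_free_inj rf).
by rewrite -trmx_mul ha !linear0 mul0mx.
Qed.

Lemma red_cdeg m k (t : 'I_m -> int) (P : 'M[{poly K}]_(m, k)) l :
  scol_reduced t P -> exists c, cdeg t P l = Some c.
Proof.
move=> hr; case h: (cdeg t P l) => [c|]; first by exists c.
have : lcoef_mx t P *m delta_mx l (0 : 'I_1) = 0.
  apply/matrixP=> i j; rewrite !mxE (bigD1 l) //= big1.
    by rewrite !mxE h mul0r addr0.
  by move=> j' hj'; rewrite !mxE (negbTE hj') mulr0.
move/(red_inj hr)/matrixP/(_ l 0); rewrite !mxE !eqxx /= => /eqP.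
by rewrite oner_eq0.
Qed.


Lemma pdeg_lb m k (t : 'I_m -> int) (P : 'M[{poly K}]_(m, k)) (w : 'cV[{poly K}]_k) l c :
  scol_reduced t P -> w l 0 != 0 -> cdeg t P l = Some c ->
  exists i, (P *m w) i 0 != 0 /\ pdeg (w l 0) + c <= pdeg ((P *m w) i 0) + t i.
Proof.
move=> hr wl hc.
pose ct j := odflt 0 (cdeg t P j).
have hct j : cdeg t P j = Some (ct j) by rewrite /ct; have [c' ->] := red_cdeg j hr.
have [D [hD leD]] := @sdeg_ge _ ct (fun j => w j 0) l wl.
rewrite /ct hc /= in leD.
pose a : 'cV[K]_k := \col_j (if (w j 0 != 0) && (pdeg (w j 0) + ct j == D)
                            then lead_coef (w j 0) else 0).
have a0 : a != 0.
  have [j0 [wj0 ej0]] := sdeg_ex hD.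
  apply/eqP => /matrixP/(_ j0 0); rewrite !mxE wj0 ej0 eqxx /= => /eqP.
  by rewrite lead_coef_eq0 (negbTE wj0).
have La0 : lcoef_mx t P *m a != 0 by apply: contra a0 => /eqP/(red_inj hr) ->.
have [i hi] : exists i, (lcoef_mx t P *m a) i 0 != 0.
  case: (boolP [exists i, (lcoef_mx t P *m a) i 0 != 0]) => [/existsP //|/existsPn hn].
  exfalso; move/negP: La0; apply; apply/eqP/matrixP => i j; rewrite (ord1 j) [RHS]mxE.
  by apply/eqP/negPn; apply: hn.
have [j1 hj1] : exists j1, lcoef_mx t P i j1 * a j1 0 != 0.
  case: (boolP [exists j, lcoef_mx t P i j * a j 0 != 0]) => [/existsP //|/existsPn hn].
  exfalso; move/negP: hi; apply; rewrite mxE big1 // => j _.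
  by apply/eqP/negPn; apply: hn.
move: hj1; rewrite mulf_eq0 negb_or => /andP [L1 a1].
rewrite mxE hct in L1; case: ifP L1 => [/andP [P1 /eqP e1] _ | _]; last by rewrite eqxx.
rewrite mxE in a1; case: ifP a1 => [/andP [w1 /eqP f1] _|_]; last by rewrite eqxx.
set N := addn (size (P i j1)).-1 (size (w j1 0)).-1.
have eN : (N%:Z) = D - t i.
  by move: e1 f1; rewrite /pdeg /N PoszD; lia.
have coefN : ((P *m w) i 0)`_N = (lcoef_mx t P *m a) i 0.
  rewrite !mxE coef_sum; apply: eq_bigr => j _.
  rewrite !mxE hct.
  have [Pz|Pnz] := eqVneq (P i j) 0; first by rewrite Pz mul0r coef0 ?eqxx /= mul0r.
  have [wz|wnz] := eqVneq (w j 0) 0; first by rewrite wz mulr0 coef0 ?eqxx /= mulr0.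
  have le1 : pdeg (P i j) + t i <= ct j := @sdeg_le _ t (fun i => P i j) (ct j) i (hct j) Pnz.
  have le2 : pdeg (w j 0) + ct j <= D := @sdeg_le _ ct (fun j => w j 0) D j hD wnz.
  rewrite /=.
  have sP : (0 < size (P i j))%N by rewrite size_poly_gt0.
  have sw : leq 1 (size (w j 0)) by rewrite size_poly_gt0.
  case E: ((pdeg (P i j) + t i == ct j) && (pdeg (w j 0) + ct j == D)).
    move/andP: E => [/eqP E1 /eqP E2]; rewrite E1 E2 !eqxx.
    rewrite -lead_coefM lead_coefE size_mul //; congr (_ `_ _).
    have : ((addn (size (P i j)).-1 (size (w j 0)).-1)%:Z = N%:Z).
      by rewrite eN PoszD; move: E1 E2; rewrite /pdeg; lia.
    move/eqP; rewrite eqz_nat => /eqP <-; move: sP sw; case: (size (P i j)) => // a2 _; case: (size (w j 0)) => // b2 _ /=; by rewrite addnS.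
  have -> : (if pdeg (P i j) + t i == ct j then lead_coef (P i j) else 0) *
            (if pdeg (w j 0) + ct j == D then lead_coef (w j 0) else 0) = 0.
    by move: E; case: (_ == _); case: (_ == _); rewrite ?mulr0 ?mul0r.
  apply: nth_default; rewrite size_mul //.
  have : ((addn (size (P i j)).-1 (size (w j 0)).-1)%:Z < N%:Z).
    rewrite eN PoszD; move/negbT/nandP: E => [] /eqP ne; move: le1 le2 ne; rewrite /pdeg; lia.
  rewrite ltz_nat; move: sP sw; case: (size (P i j)) => // a2 _; case: (size (w j 0)) => // b2 _ /=; by rewrite addnS.
rewrite -coefN in hi.
have nz : (P *m w) i 0 != 0 by apply: contraNneq hi => ->; rewrite coef0.
have sz : leq N.+1 (size ((P *m w) i 0)).
  by rewrite ltnNge; apply: contra hi => h; apply/eqP/nth_default.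
exists i; split => //; apply: le_trans leD _.
have : D = N%:Z + t i by rewrite eN subrK.
move=> ->; rewrite /pdeg lerD2r lez_nat; lia.
Qed.


Lemma unimod_unit n (A : 'M[{poly K}]_n) : unimodular A <-> A \in unitmx.
Proof.
rewrite /unimodular unitmxE poly_unitE; split.
  move=> h; rewrite h eqxx /= unitfE.
  have : lead_coef (\det A) != 0 by rewrite lead_coef_eq0 -size_poly_eq0 h.
  by rewrite lead_coefE h.
by case/andP => /eqP.
Qed.

Lemma col_mulmx m k p (A : 'M[{poly K}]_(m, k)) (B : 'M_(k, p)) j :
  col j (A *m B) = A *m col j B.
Proof. by apply/matrixP => i i'; rewrite !mxE; apply: eq_bigr => l _; rewrite !mxE. Qed.

Lemma unit_col_nz n (V : 'M[{poly K}]_n) k : V \in unitmx -> exists l, V l k != 0.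
Proof.
move=> Vu.
case: (boolP [exists l, V l k != 0]) => [/existsP //|/existsPn hn].
exfalso.
have : V *m delta_mx k (0 : 'I_1) = 0.
  apply/matrixP => i j; rewrite !mxE (bigD1 k) //= big1.
    by rewrite !mxE eqxx (eqP (negPn (hn i))) mul0r addr0.
  by move=> j' hj'; rewrite !mxE (negbTE hj') mulr0.
move/(congr1 (mulmx (invmx V))); rewrite mulKmx // mulmx0.
move/matrixP/(_ k 0); rewrite !mxE !eqxx /= => /eqP; by rewrite oner_eq0.
Qed.

Lemma unit_row_nz n (V : 'M[{poly K}]_n) i : V \in unitmx -> exists l, V i l != 0.
Proof.
move=> Vu; have : V^T \in unitmx by rewrite unitmx_tr.
by move/(unit_col_nz i) => [l]; rewrite mxE; exists l.
Qed.

Lemma catshiftL n1 n2 (a : 'I_n1 -> int) (b : 'I_n2 -> int) i :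
  catshift a b (lshift n2 i) = a i.
Proof. by rewrite /catshift; have /= -> := @unsplitK n1 n2 (inl i). Qed.

Lemma catshiftR n1 n2 (a : 'I_n1 -> int) (b : 'I_n2 -> int) i :
  catshift a b (rshift n1 i) = b i.
Proof. by rewrite /catshift; have /= -> := @unsplitK n1 n2 (inr i). Qed.

End Sdeg.

Theorem mainTheorem2 (K : fieldType) (n : nat) (F H Nu Nd : 'M[{poly K}]_n) :
  nonsingular F -> col_reduced F -> is_hermite_nf F H ->
  let s : 'I_n -> nat := fun i => (size (H i i)).-1 in
  let smax : nat := (\max_(i < n) s i)%N in
  minimal_right_kernel_basis
    (catshift (fun _ : 'I_n => - (smax%:Z)) (fun i => - ((s i)%:Z)))
    (row_mx F (- 1%:M)) (col_mx Nu Nd) ->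
  [/\ unimodular Nu,
      forall i : 'I_n, rdeg Nd i = Some ((s i)%:Z) &
      exists V : 'M[{poly K}]_n, unimodular V /\ Nd = H *m V].
Proof.
move=> hF hFr [[hT hM hL] [U [hU HFU]]] s smax [[_ AN gen] Nred].
have eNd : Nd = F *m Nu.
  by move: AN; rewrite mul_row_col mulNmx mul1mx => /eqP; rewrite subr_eq0 => /eqP.
have hf' : forall j : 'I_n, exists c : 'cV_n, col j (col_mx 1%:M F) = col_mx Nu Nd *m c.
  move=> j; apply: gen.
  by rewrite -col_mulmx mul_row_col mulmx1 mulNmx mul1mx subrr; apply/matrixP => i i'; rewrite !mxE.
have [f hf] := fin_all_exists hf'.
pose C := \matrix_(i, j) f j i 0.
have hC : col_mx 1%:M F = col_mx Nu Nd *m C.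
  apply/matrixP => i j; move/matrixP/(_ i 0): (hf j); rewrite !mxE => ->.
  by apply: eq_bigr => l _; rewrite !mxE.
move: hC; rewrite mul_col_mx => /eq_col_mx [hC1 _].
have Nuu : Nu \in unitmx by case: (mulmx1_unit (esym hC1)).
have Uu : U \in unitmx by apply/unimod_unit.
pose V := invmx U *m Nu.
have Vu : V \in unitmx by rewrite unitmx_mul unitmx_inv Uu.
have eNdV : Nd = H *m V by rewrite /V HFU mulmxA mulmxK // eNd.
have eNu : Nu = U *m V by rewrite /V mulmxA mulmxV // mul1mx.
split; [by apply/unimod_unit | | by exists V; split => //; apply/unimod_unit].
have Hii : forall i, H i i != 0 by move=> i; apply: monic_neq0.
have hHle : forall i j, H i j != 0 -> (size (H i j) <= size (H i i))%N.
  move=> i j nz; case: (ltngtP i j) => h.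
  - by rewrite hT // eqxx in nz.
  - exact: ltnW (hL _ _ h).
  - by have -> : j = i by apply: val_inj.
have sle : forall i, (s i <= smax)%N.
  by move=> i; rewrite /smax; apply: leq_bigmax.
have pdegH : forall i j, pdeg (H i j) <= (s i)%:Z.
  move=> i j; have [->|nz] := eqVneq (H i j) 0; first by rewrite /pdeg size_poly0.
  by have := hHle i j nz; rewrite /pdeg lez_nat /s; lia.
have hUdeg : forall l j, pdeg (U l j) <= smax%:Z.
  move=> l j; have [->|nz] := eqVneq (U l j) 0; first by rewrite /pdeg size_poly0.
  have [c hc] := red_cdeg l hFr.
  have c0 : 0 <= c by have [i0 [_ <-]] := sdeg_ex hc; rewrite addr0 /pdeg.
  have [i [_ le]] := @pdeg_lb K n n (fun _ => 0) F (col j U) l c hFr ltac:(by rewrite mxE) hc.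
  rewrite -col_mulmx -HFU !mxE addr0 in le.
  move: le (pdegH i j) (sle i) c0; move: (pdeg (U l j)) (pdeg (H i j)) (s i) => a1 a2 a3; rewrite -/smax; lia.
have hcH : forall j, cdeg (fun i => - (s i)%:Z) H j = Some 0.
  move=> j; apply: sdeg_Some; first by exists j; split; [exact: Hii | rewrite subrr].
  by move=> i nz; rewrite subr_le0; exact: pdegH.
have hL1 : lcoef_mx (fun i => - (s i)%:Z) H = 1%:M.
  apply/matrixP => i j; rewrite !mxE hcH.
  have [<-|ne] := eqVneq i j.
    by rewrite Hii /pdeg /s subrr eqxx /=; exact: (monicP (hM i)).
  rewrite /=; case: ifP => // /andP [nz /eqP e]; exfalso.
  case: (ltngtP i j) => h.
  - by rewrite hT // eqxx in nz.
  - have := hL i j h; have := size_poly_gt0 (H i j); rewrite nz.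
    by move: e; rewrite /pdeg /s; lia.
  - by move/negP: ne; apply; apply/eqP/val_inj.
have Hred : scol_reduced (fun i => - (s i)%:Z) H by rewrite /scol_reduced hL1 mxrank1.
have cpos : forall k, exists ck, cdeg (catshift (fun _ : 'I_n => - (smax%:Z)) (fun i => - ((s i)%:Z))) (col_mx Nu Nd) k = Some ck /\ 0 <= ck.
  move=> k; have [l Vl] := unit_col_nz k Vu.
  have [i [nz le]] := @pdeg_lb K n n _ H (col k V) l 0 Hred ltac:(by rewrite mxE) (hcH l).
  rewrite -col_mulmx -eNdV [col k V l 0]mxE [col k Nd i 0]mxE addr0 in nz le.
  have [ck hck] := red_cdeg k Nred.
  exists ck; split => //.
  have := sdeg_le hck (j := rshift n i); rewrite col_mxEd catshiftR => /(_ nz).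
  have p0 : 0 <= pdeg (V l k) by [].
  move: le p0; move: (pdeg (V l k)) (pdeg (Nd i k)) (s i) => a1 a2 a3; lia.
pose Vi := invmx V.
have hMi : col_mx Nu Nd *m Vi = col_mx U H by rewrite eNu eNdV -mul_col_mx mulmxK.
have hVic : forall k j, (size (Vi k j) <= 1)%N.
  move=> k j; have [->|nz] := eqVneq (Vi k j) 0; first by rewrite size_poly0.
  have [ck [hck ck0]] := cpos k.
  have wl : col j Vi k 0 != 0 by rewrite mxE.
  have [i [_ le]] := pdeg_lb Nred wl hck.
  rewrite -col_mulmx hMi [col j Vi k 0]mxE [col j _ i 0]mxE in le.
  have sz1 : (Vi k j != 0) -> pdeg (Vi k j) <= 0 -> (size (Vi k j) <= 1)%N.
    by rewrite /pdeg -size_poly_gt0; move: (size (Vi k j)) => a1; lia.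
  apply: sz1 => //.
  case: (split_ordP i) => i' ei; rewrite ei in le.
    rewrite col_mxEu catshiftL in le.
    by move: le (hUdeg i' j) ck0; move: (pdeg (Vi k j)) (pdeg (U i' j)) => a1 a2; lia.
  rewrite col_mxEd catshiftR in le.
  by move: le (pdegH i' j) ck0; move: (pdeg (Vi k j)) (pdeg (H i' j)) (s i') => a1 a2 a3; lia.
pose B := map_mx (fun p : {poly K} => p`_0) Vi.
have hViB : Vi = map_mx polyC B.
  by apply/matrixP => k j; rewrite !mxE; apply: size1_polyC.
have hVB : V = map_mx polyC (invmx B) by rewrite map_invmx -hViB /Vi invmxK.
move=> i.
have [j0 Vj0] := unit_row_nz i Vu.
have ssi : size (H i i) = (s i).+1 by rewrite /s prednK // size_poly_gt0 Hii.
have coefNd : forall j N, (Nd i j)`_N = \sum_k (H i k)`_N * invmx B k j.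
  by move=> j N; rewrite eNdV hVB !mxE coef_sum; apply: eq_bigr => k _; rewrite mxE coefMC.
have szNd : forall j, (size (Nd i j) <= (s i).+1)%N.
  move=> j; apply/leq_sizeP => N hN; rewrite coefNd big1 // => k _.
  have [->|nz] := eqVneq (H i k) 0; first by rewrite coef0 mul0r.
  rewrite nth_default ?mul0r //; apply: leq_trans (hHle _ _ nz) _; by rewrite ssi.
have cNd : forall j, (Nd i j)`_(s i) = invmx B i j.
  move=> j; rewrite coefNd (bigD1 i) //= big1 ?addr0.
    by have := monicP (hM i); rewrite lead_coefE => ->; rewrite mul1r.
  move=> k nik; have [->|nz] := eqVneq (H i k) 0; first by rewrite coef0 mul0r.
  rewrite nth_default ?mul0r //.
  case: (ltngtP k i) => h.
  - by have := hL i k h; rewrite ssi.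
  - by rewrite hT // eqxx in nz.
  - by move/negP: nik; case; apply/eqP/val_inj.
have Bnz : invmx B i j0 != 0 by move: Vj0; rewrite hVB mxE polyC_eq0.
rewrite /rdeg; apply: sdeg_Some.
  exists j0; rewrite -cNd in Bnz.
  have nz : Nd i j0 != 0 by apply: contraNneq Bnz => ->; rewrite coef0.
  split => //; rewrite addr0 /pdeg; congr Posz.
  have : ((s i) < size (Nd i j0))%N.
    by rewrite ltnNge; apply: contra Bnz => h; apply/eqP/nth_default.
  by move: (szNd j0); lia.
move=> j _; rewrite addr0 /pdeg lez_nat; move: (szNd j); lia.
Qed.
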